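(* Let $n\ge2$, $\omega\in\mathbb{R}^n$, $k\in\mathbb{R}_{>0}^n$ satisfy (IC1) $\sum_\mu\omega_\mu=0$, (IC2) $\omega\ne0$, (IC3) $\left|\frac{\omega_1}{k_1}\right|\le\cdots\le\left|\frac{\omega_n}{k_n}\right|$. For $\sigma\in\{-1,+1\}^n$ let $f_\sigma(R)=-R+\frac1n\sum_{\mu=1}^n\sigma_\mu\sqrt{k_\mu^2R-\omega_\mu^2}$. Let $\sigma\in\{-1,+1\}^n$ and $\mu$ be an index with $\sigma_\mu=+1$, and let $\sigma'$ be given by $\sigma'_\mu=-1$ and $\sigma'_\nu=\sigma_\nu$ for $\nu\ne\mu$. If $f_\sigma$ has no positive roots, then $f_{\sigma'}$ has no positive roots.
   Context: Square roots are nonnegative real square roots; a positive root of $f_\sigma$ is a real $R>0$ with $k_\mu^2R-\omega_\mu^2\ge0$ for all $\mu$ and $f_\sigma(R)=0$. *)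

(* Defs.v *)
From HB Require Import structures.
From mathcomp Require Import all_boot all_order all_algebra.
Set Implicit Arguments. Unset Strict Implicit. Unset Printing Implicit Defensive.
Import Order.TTheory GRing.Theory Num.Theory.
Local Open Scope ring_scope.

(* A sign vector sigma in {-1,+1}^n is encoded as sigma : 'I_n -> bool,
   with true meaning +1 and false meaning -1. *)
Definition sgn (R : numDomainType) (b : bool) : R := if b then 1 else -1.

Definition fsig (F : rcfType) (n : nat) (omega k : 'I_n -> F)
    (sigma : 'I_n -> bool) (R : F) : F :=
  - R + n%:R^-1 * \sum_(mu < n) sgn F (sigma mu) * Num.sqrt (k mu ^+ 2 * R - omega mu ^+ 2).

Definition pos_root (F : rcfType) (n : nat) (omega k : 'I_n -> F)
    (sigma : 'I_n -> bool) (R : F) : Prop :=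
  0 < R /\ (forall mu, 0 <= k mu ^+ 2 * R - omega mu ^+ 2) /\ fsig omega k sigma R = 0.

Definition flip_to_minus (n : nat) (sigma : 'I_n -> bool) (mu : 'I_n) : 'I_n -> bool :=
  fun nu => if nu == mu then false else sigma nu.

(* Main.v *)
Require Import Defs.
From HB Require Import structures.
From mathcomp Require Import all_boot all_order all_algebra.
From mathcomp Require Import polyrcf.
From mathcomp Require Import ring lra zify.
Import Order.TTheory GRing.Theory Num.Theory.
Local Open Scope ring_scope.

Set Bullet Behavior "Strict Subproofs".
Set Implicit Arguments.
Section S.
Variable F : rcfType.

Definition phi (a b c : F) : F :=
  if c == 1 then a else if c == -1 then b else
  if (a == 1) && (b == 1) then 1 else if (a == -1) && (b == -1) then -1 else 0.

Lemma phiP (G H q : F) : 0 <= q ->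
  Num.sg (G + H * Num.sqrt q) = phi (Num.sg G) (Num.sg H) (Num.sg (G ^+ 2 - H ^+ 2 * q)).
Proof.
move=> q0; have s0 := sqrtr_ge0 q; have sq := sqr_sqrtr q0.
set s := Num.sqrt q in s0 sq *; rewrite -sq -exprMn /phi !sgr_cp0.
have [hH|hH|hH] := ltrgtP H 0.
- have ht : H * s <= 0 by nra.
  move: (H * s) ht => t ht.
  have [hN|hN|hN] := ltrgtP (G ^+ 2 - t ^+ 2) 0;
  have [hG|hG|hG] := ltrgtP G 0; rewrite /= ?(ltr0_sg hH) ?(gtr0_sg hH) ?(ltr0_sg hG) ?(gtr0_sg hG).
  all: try (rewrite ltr0_sg //; nra).
  all: try (rewrite gtr0_sg //; nra).
  all: try (apply/eqP; rewrite sgr_eq0; apply/eqP; nra).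
  all: try (exfalso; nra).
- have ht : 0 <= H * s by nra.
  move: (H * s) ht => t ht.
  have [hN|hN|hN] := ltrgtP (G ^+ 2 - t ^+ 2) 0;
  have [hG|hG|hG] := ltrgtP G 0; rewrite /= ?(ltr0_sg hH) ?(gtr0_sg hH) ?(ltr0_sg hG) ?(gtr0_sg hG).
  all: try (rewrite ltr0_sg //; nra).
  all: try (rewrite gtr0_sg //; nra).
  all: try (apply/eqP; rewrite sgr_eq0; apply/eqP; nra).
  all: try (exfalso; nra).
- subst H; rewrite mul0r expr0n /= subr0 addr0 /=.
  have [hG|hG|hG] := ltrgtP G 0; rewrite /= ?(ltr0_sg hG) ?(gtr0_sg hG) //.
  + by rewrite ifT //; nra.
  + by rewrite ifT //; nra.
  + by subst G; rewrite expr0n /= ltxx sgr0.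
Qed.

Section Cls.
Variable D : F -> Prop.

Fixpoint inC (qs : seq {poly F}) (f : F -> F) : Prop :=
  match qs with
  | [::] => exists p : {poly F}, forall x, D x -> f x = p.[x]
  | q :: qs' => exists g h, inC qs' g /\ inC qs' h /\
       forall x, D x -> f x = g x + h x * Num.sqrt q.[x]
  end.

Definition posq (qs : seq {poly F}) := forall q, q \in qs -> forall x, D x -> 0 <= q.[x].

Lemma inC_ext qs f f' : (forall x, D x -> f x = f' x) -> inC qs f -> inC qs f'.
Proof.
case: qs => [|q qs] /= E.
  by case=> p Hp; exists p => x Dx; rewrite -E // Hp.
by case=> g [h [Hg [Hh E']]]; exists g, h; do 2 split=> //; move=> x Dx; rewrite -E // E'.
Qed.

Arguments inC_ext [qs] f [f'].

Lemma inC_poly qs p : inC qs (fun x => p.[x]).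
Proof.
elim: qs p => [|q qs IH] p /=; first by exists p.
exists (fun x => p.[x]), (fun x => 0); split => //; split.
  by apply: (inC_ext (fun x => (0 : {poly F}).[x])); [move=> x _; rewrite horner0|].
by move=> x _; rewrite mul0r addr0.
Qed.

Lemma inC_add qs f g : inC qs f -> inC qs g -> inC qs (fun x => f x + g x).
Proof.
elim: qs f g => [|q qs IH] f g /=.
  by case=> p Hp [p' Hp']; exists (p + p') => x Dx; rewrite hornerD Hp ?Hp'.
case=> g1 [h1 [Hg1 [Hh1 E1]]] [g2 [h2 [Hg2 [Hh2 E2]]]].
exists (fun x => g1 x + g2 x), (fun x => h1 x + h2 x); split; first exact: IH.
split; first exact: IH.
by move=> x Dx; rewrite E1 // E2 //; ring.
Qed.

Lemma inC_mul qs f g : posq qs -> inC qs f -> inC qs g -> inC qs (fun x => f x * g x).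
Proof.
elim: qs f g => [|q qs IH] f g /= hq.
  by case=> p Hp [p' Hp']; exists (p * p') => x Dx; rewrite hornerM Hp ?Hp'.
have hq' : posq qs by move=> q' q'in; apply: hq; rewrite inE q'in orbT.
case=> g1 [h1 [Hg1 [Hh1 E1]]] [g2 [h2 [Hg2 [Hh2 E2]]]].
exists (fun x => g1 x * g2 x + h1 x * h2 x * q.[x]), (fun x => g1 x * h2 x + h1 x * g2 x).
split. apply: inC_add; first exact: IH.
  apply: (IH) => //; [exact: (IH)| exact: inC_poly].
split. apply: inC_add; exact: IH.
move=> x Dx; rewrite E1 // E2 //.
have := sqr_sqrtr (hq q (mem_head _ _) x Dx).
set s := Num.sqrt _ => hs. rewrite -hs; ring.
Qed.

Lemma inC_sqrt qs q : q \in qs -> inC qs (fun x => Num.sqrt q.[x]).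
Proof.
elim: qs => [|q' qs IH] //=; rewrite inE => /orP[/eqP<-|qin].
  exists (fun x => 0), (fun x => 1); split.
    by apply: (inC_ext (fun x => (0 : {poly F}).[x])); [move=> x _; rewrite horner0| apply: inC_poly].
  split; last by move=> x _; rewrite add0r mul1r.
  by apply: (inC_ext (fun x => (1 : {poly F}).[x])); [move=> x _; rewrite hornerC| apply: inC_poly].
exists (fun x => Num.sqrt q.[x]), (fun x => 0); split; first exact: IH.
split; last by move=> x _; rewrite mul0r addr0.
by apply: (inC_ext (fun x => (0 : {poly F}).[x])); [move=> x _; rewrite horner0| apply: inC_poly].
Qed.

Definition SD (f : F -> F) := exists S : seq F, forall z w, D z -> D w -> z <= w ->
  ~~ has (fun y => (z <= y) && (y <= w)) S -> Num.sg (f z) = Num.sg (f w).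

Lemma SD_poly p : SD (fun x => p.[x]).
Proof.
have [->|p0] := eqVneq p 0.
  by exists [::] => z w *; rewrite !horner0.
exists (roots p (- cauchy_bound p) (cauchy_bound p)) => z w _ _ zw /hasPn H.
have [hl|hl] := leP (p.[z] * p.[w]) 0.
  have [x xin rx] := polyrcf.poly_ivt zw hl.
  have := H x (root_in_roots p0 (root_in_cauchy_bound p0 rx) rx).
  by rewrite (itvP xin) (itvP xin).
have [hz|hz|hz] := ltrgtP p.[z] 0; have [hw|hw|hw] := ltrgtP p.[w] 0.
all: try by rewrite ?(ltr0_sg hz) ?(gtr0_sg hz) ?(ltr0_sg hw) ?(gtr0_sg hw).
all: exfalso; nra.
Qed.

Lemma SD_inC qs f : posq qs -> inC qs f -> SD f.
Proof.
elim: qs f => [|q qs IH] f hq /=.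
  case=> p Hp; have [S HS] := SD_poly p; exists S => z w Dz Dw zw hS.
  by rewrite Hp // Hp // (HS z w).
have hq' : posq qs by move=> q' q'in; apply: hq; rewrite inE q'in orbT.
case=> g [h [Hg [Hh E]]].
have HN : inC qs (fun x => g x ^+ 2 - h x ^+ 2 * q.[x]).
  apply: inC_add; first by apply: inC_mul.
  apply: (inC_ext (fun x => (-1 : {poly F}).[x] * (h x ^+ 2 * q.[x]))).
    by move=> x _; rewrite hornerN hornerC mulN1r.
  apply: inC_mul => //; first exact: inC_poly.
  apply: inC_mul => //; last exact: inC_poly.
  exact: inC_mul.
have [Sg HSg] := IH g hq' Hg.
have [Sh HSh] := IH h hq' Hh.
have [SN HSN] := IH _ hq' HN.
exists (Sg ++ Sh ++ SN) => z w Dz Dw zw; rewrite !has_cat !negb_or => /and3P[h1 h2 h3].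
rewrite E // E // !phiP ?(hq q (mem_head _ _)) //.
by rewrite (HSg z w) // (HSh z w) // (HSN z w).
Qed.


Lemma count_lt (a1 a2 : pred F) (s : seq F) y :
  (forall x, a1 x -> a2 x) -> y \in s -> a2 y -> ~~ a1 y -> (count a1 s < count a2 s)%N.
Proof.
move=> sub; elim: s => [|x s IH] //=; rewrite inE => /orP[/eqP <-|ys] a2y na1y.
  rewrite (negbTE na1y) a2y add0n add1n ltnS; exact: sub_count.
have := IH ys a2y na1y; case: (a1 x) (sub x) => [->|] //=; case: (a2 x) => /=; lia.
Qed.

Lemma ivt_sd (g : F -> F) (S : seq F) :
  (forall x y, D x -> x <= y -> D y) ->
  (forall z w, D z -> D w -> z <= w -> ~~ has (fun y => (z <= y) && (y <= w)) S ->
      Num.sg (g z) = Num.sg (g w)) ->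
  (forall p, D p -> g p != 0 -> exists2 d, 0 < d &
      forall x, D x -> `|x - p| < d -> Num.sg (g x) = Num.sg (g p)) ->
  forall z w, D z -> z <= w -> g z < 0 -> 0 < g w -> exists x, [/\ z <= x, x <= w & g x = 0].
Proof.
move=> Dup HS Hc z w Dz zw gz gw.
have [k hk] : exists k, (count (fun y => ((z <= y) && (y <= w))%R) S < k)%N by exists (count (fun y => ((z <= y) && (y <= w))%R) S).+1.
elim: k z w Dz zw gz gw hk => [|k IH] z w Dz zw gz gw hk //.
have Dw := Dup _ _ Dz zw.
case hh: (has (fun y => (z <= y) && (y <= w)) S); last first.
  have := HS z w Dz Dw zw (negbT hh); rewrite (ltr0_sg gz) (gtr0_sg gw) => E.
  have : (-1 : F) < 1 by lra.
  by rewrite E ltxx.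
move/hasP: hh => [p pS /andP[zp pw]].
have Dp := Dup _ _ Dz zp.
have [gp0|gpn0] := eqVneq (g p) 0; first by exists p.
have [d d0 Hd] := Hc p Dp gpn0.
move: (gpn0); rewrite neq_lt => /orP[gpneg|gppos].
- have [wx|xw] := leP w (p + d / 2).
    have := Hd w Dw; rewrite (gtr0_sg gw) (ltr0_sg gpneg).
    have -> : `|w - p| = w - p by rewrite ger0_norm // subr_ge0.
    move=> H; have : (1 : F) = -1 by apply: H; lra.
    move=> E; have : (-1 : F) < 1 by lra.
    by rewrite -E ltxx.
  have Dx : D (p + d / 2) by apply: (Dup p) => //; lra.
  have gx : g (p + d / 2) < 0.
    rewrite -sgr_cp0 Hd //; first by rewrite sgr_cp0.
    have -> : p + d / 2 - p = d / 2 by ring.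
    by rewrite ger0_norm; lra.
  pose A := fun y : F => (z <= y) && (y <= w).
  pose A' := fun y : F => (p + d / 2 <= y) && (y <= w).
  have hlt : (count A' S < count A S)%N.
    { apply: (@count_lt _ _ _ p).
    + by move=> y /andP[h1 h2]; apply/andP; split => //; lra.
    + exact: pS.
    + by rewrite /A zp pw.
    + by apply/negP => /andP[h1 h2]; lra. }
  have hk' : (count A' S < k)%N by apply: (leq_trans hlt); rewrite -ltnS; exact: hk.
  have [x [h1 h2 h3]] := IH (p + d / 2) w Dx (ltW xw) gx gw hk'.
  by exists x; split => //; lra.
- have [xz|zx] := leP (p - d / 2) z.
    have := Hd z Dz; rewrite (ltr0_sg gz) (gtr0_sg gppos).
    have -> : `|z - p| = p - z by rewrite ler0_norm ?opprB // subr_le0.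
    move=> H; have : (-1 : F) = 1 by apply: H; lra.
    move=> E; have : (-1 : F) < 1 by lra.
    by rewrite E ltxx.
  have Dx : D (p - d / 2) by apply: (Dup z) => //; lra.
  have gx : 0 < g (p - d / 2).
    rewrite -sgr_cp0 Hd //; first by rewrite sgr_cp0.
    have -> : p - d / 2 - p = - (d / 2) by ring.
    by rewrite normrN ger0_norm; lra.
  pose A := fun y : F => (z <= y) && (y <= w).
  pose A' := fun y : F => (z <= y) && (y <= p - d / 2).
  have hlt : (count A' S < count A S)%N.
    { apply: (@count_lt _ _ _ p).
    + by move=> y /andP[h1 h2]; apply/andP; split => //; lra.
    + exact: pS.
    + by rewrite /A zp pw.
    + by apply/negP => /andP[h1 h2]; lra. }
  have hk' : (count A' S < k)%N by apply: (leq_trans hlt); rewrite -ltnS; exact: hk.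
  have [x [h1 h2 h3]] := IH z (p - d / 2) Dz (ltW zx) gz gx hk'.
  by exists x; split => //; lra.
Qed.

Lemma inC_sum qs (I : Type) (r : seq I) (G : I -> F -> F) :
  (forall i, inC qs (G i)) -> inC qs (fun x => \sum_(i <- r) G i x).
Proof.
move=> HG; elim: r => [|i r IH].
  apply: (inC_ext (fun x => (0 : {poly F}).[x])); last exact: inC_poly.
  by move=> x _; rewrite big_nil horner0.
apply: (inC_ext (fun x => G i x + \sum_(j <- r) G j x)); last exact: inC_add.
by move=> x _; rewrite big_cons.
Qed.

End Cls.

Lemma sqrt_diff (a b : F) : 0 <= a -> 0 <= b ->
  `|Num.sqrt a - Num.sqrt b| <= Num.sqrt `|a - b|.
Proof.
move=> a0 b0; rewrite -[X in X <= _]sqrtr_sqr; apply: ler_wsqrtr.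
have := sqr_sqrtr a0; have := sqr_sqrtr b0.
have := sqrtr_ge0 a; have := sqrtr_ge0 b.
move: (Num.sqrt a) (Num.sqrt b) => sa sb hb ha eb ea.
rewrite -ea -eb.
have h1 := ler_norm (sa ^+ 2 - sb ^+ 2).
have h2 : - (sa ^+ 2 - sb ^+ 2) <= `|sa ^+ 2 - sb ^+ 2| by rewrite -normrN ler_norm.
move: (`|_|) h1 h2 => N h1 h2.
have [h|h] := leP sa sb; nra.
Qed.

Lemma sg_close (a b : F) : `|a - b| < `|b| -> Num.sg a = Num.sg b.
Proof.
have [hb|hb|hb] := ltrgtP b 0.
- rewrite (ltr0_norm hb) (ltr0_sg hb) => h; rewrite ltr0_sg //.
  have := ler_norm (a - b); lra.
- rewrite (gtr0_norm hb) (gtr0_sg hb) => h; rewrite gtr0_sg //.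
  have : - (a - b) <= `|a - b| by rewrite -normrN ler_norm.
  lra.
- by subst b; rewrite normr0 ltr_norml => /andP[]; lra.
Qed.

End S.
Unset Implicit Arguments.

Theorem lemma2 (F : rcfType) (n : nat) (omega k : 'I_n -> F)
  (hn : (2 <= n)%N)
  (hk : forall mu, 0 < k mu)
  (IC1 : \sum_(mu < n) omega mu = 0)
  (IC2 : exists mu, omega mu != 0)
  (IC3 : forall mu nu : 'I_n, (mu <= nu)%N ->
           `|omega mu / k mu| <= `|omega nu / k nu|)
  (sigma : 'I_n -> bool) (mu : 'I_n) (hmu : sigma mu = true) :
  (~ exists R, pos_root omega k sigma R) ->
  ~ exists R, pos_root omega k (flip_to_minus sigma mu) R.
Proof.
move=> nroot [R1 [R1pos [Rad fz]]]; apply: nroot.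
pose qi (i : 'I_n) : {poly F} := (k i ^+ 2)%:P * 'X - (omega i ^+ 2)%:P.
have qiE : forall i x, (qi i).[x] = k i ^+ 2 * x - omega i ^+ 2.
  by move=> i x; rewrite /qi hornerD hornerN hornerMX !hornerC.
pose qs := [seq qi i | i <- enum 'I_n].
pose D := fun x : F => 0 < x /\ forall i, 0 <= k i ^+ 2 * x - omega i ^+ 2.
have Dup : forall x y, D x -> x <= y -> D y.
  move=> x y [x0 hx] xy; split; first lra.
  move=> i; have := hx i.
  have : 0 <= k i ^+ 2 * (y - x) by apply: mulr_ge0; [exact: sqr_ge0 | lra].
  lra.
have hq : posq D qs.
  by move=> q /mapP [i _ ->] x [_ hx]; rewrite qiE; exact: hx.
pose f := fun x => fsig omega k sigma x.
have n0 : 0 < (n%:R : F) by rewrite ltr0n; lia.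
have ni0 : 0 < (n%:R : F)^-1 by rewrite invr_gt0.
pose sq := fun i x => Num.sqrt (k i ^+ 2 * x - omega i ^+ 2).
have inCf : inC D qs (fun x => - f x).
  apply: (@inC_ext F D qs (fun x => ('X : {poly F}).[x] + (- (n%:R : F)^-1)%:P.[x] *
     \sum_(i < n) ((sgn F (sigma i))%:P.[x] * Num.sqrt (qi i).[x]))).
    move=> x _; rewrite /f /fsig hornerX hornerC.
    under eq_bigr => i _ do rewrite hornerC qiE.
    by rewrite opprD opprK mulNr.
  apply: inC_add; first exact: inC_poly.
  apply: inC_mul => //; first exact: inC_poly.
  apply: inC_sum => i; apply: inC_mul => //; first exact: inC_poly.
  by apply: inC_sqrt; apply/mapP; exists i => //; rewrite mem_enum.
have [S HS] := @SD_inC F D qs _ hq inCf.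
pose K := (n%:R : F)^-1 * \sum_(i < n) k i.
have K0 : 0 <= K by apply: mulr_ge0; [exact: ltW | apply: sumr_ge0 => i _; exact: ltW].
have nsg : forall b, `|sgn F b| = 1 by case; rewrite /sgn ?normrN normr1.
have bnd : forall x p, D x -> D p -> `|f x - f p| <= `|x - p| + K * Num.sqrt `|x - p|.
  move=> x p [_ Dx] [_ Dp].
  have -> : f x - f p = - (x - p) + (n%:R : F)^-1 * \sum_(i < n) (sgn F (sigma i) *
      (sq i x - sq i p)).
    rewrite /f /fsig /sq.
    under [X in _ = _ + _ * X]eq_bigr => i _ do rewrite mulrBr.
    rewrite sumrB; ring.
  apply: le_trans (ler_normD _ _) _; rewrite normrN lerD2l normrM (gtr0_norm ni0) -mulrA.
  apply: ler_wpM2l; first exact: ltW.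
  apply: le_trans (ler_norm_sum _ _ _) _; rewrite mulr_suml; apply: ler_sum => i _.
  rewrite normrM nsg mul1r /sq; apply: (le_trans (@sqrt_diff F _ _ (Dx i) (Dp i))).
  have -> : k i ^+ 2 * x - omega i ^+ 2 - (k i ^+ 2 * p - omega i ^+ 2) = k i ^+ 2 * (x - p) by ring.
  rewrite normrM sqrtrM ?normr_ge0 // (ger0_norm (sqr_ge0 _)) sqrtr_sqr (gtr0_norm (hk i)).
  done.
have Hc : forall p, D p -> - f p != 0 -> exists2 d, 0 < d &
      forall x, D x -> `|x - p| < d -> Num.sg (- f x) = Num.sg (- f p).
  move=> p Dp gp.
  pose c := `|- f p|.
  have c0 : 0 < c by rewrite normr_gt0.
  pose e := c / (2 * (1 + K) + c).
  have den0 : 0 < 2 * (1 + K) + c by lra.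
  have hE : e * (2 * (1 + K) + c) = c by rewrite /e divfK // gt_eqF.
  have e0 : 0 < e by rewrite /e divr_gt0.
  have e1 : e < 1 by nra.
  exists (e ^+ 2); first exact: exprn_gt0.
  move=> x Dx hx; apply: sg_close.
  have t0 := normr_ge0 (x - p).
  move: (`|x - p|) t0 hx (bnd x p Dx Dp) => t t0 hx hb.
  have st : Num.sqrt t < e.
    by rewrite -(gtr0_norm e0) -sqrtr_sqr ltr_sqrt // exprn_gt0.
  have st0 := sqrtr_ge0 t.
  have stt := sqr_sqrtr t0.
  have tle : t <= Num.sqrt t by rewrite -{1}stt; nra.
  have -> : - f x - - f p = - (f x - f p) by ring.
  rewrite normrN; apply: le_lt_trans hb _.
  rewrite -/c.
  have h1 : 0 < (1 + K) * (e - Num.sqrt t) by apply: mulr_gt0; lra.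
  have h2 : 0 < c * e by apply: mulr_gt0.
  have h3 : K * Num.sqrt t <= K * Num.sqrt t by [].
  nra.
have fR1 : 0 <= f R1.
  have E : f R1 - fsig omega k (flip_to_minus sigma mu) R1 = 2 * (n%:R : F)^-1 * sq mu R1.
    rewrite /f /fsig (bigD1 mu) //= [in X in _ - X](bigD1 mu) //= hmu /flip_to_minus eqxx /=.
    have -> : \sum_(i < n | i != mu) sgn F (if i == mu then false else sigma i) *
        Num.sqrt (k i ^+ 2 * R1 - omega i ^+ 2) =
      \sum_(i < n | i != mu) sgn F (sigma i) * Num.sqrt (k i ^+ 2 * R1 - omega i ^+ 2).
      by apply: eq_bigr => i hi; rewrite (negbTE hi).
    rewrite /sgn /sq; ring.
  move: E; rewrite fz subr0 => ->.
  apply: mulr_ge0; [apply: mulr_ge0; [lra | exact: ltW] | exact: sqrtr_ge0].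
have [f0|fn0] := eqVneq (f R1) 0.
  by exists R1; split.
pose B := R1 + (1 + K) ^+ 2.
have RB : R1 <= B by rewrite /B lerDl sqr_ge0.
have DR1 : D R1 by [].
have DB := Dup _ _ DR1 RB.
have fB : f B < 0.
  have hsum : \sum_(i < n) sgn F (sigma i) * sq i B <= \sum_(i < n) k i * Num.sqrt B.
    apply: ler_sum => i _.
    have s0 := sqrtr_ge0 (k i ^+ 2 * B - omega i ^+ 2).
    have h1 : sgn F (sigma i) * sq i B <= sq i B by rewrite /sgn /sq; case: (sigma i); lra.
    apply: le_trans h1 _; rewrite /sq.
    have -> : k i * Num.sqrt B = Num.sqrt (k i ^+ 2 * B).
      by rewrite sqrtrM ?sqr_ge0 // sqrtr_sqr gtr0_norm.
    apply: ler_wsqrtr; have := sqr_ge0 (omega i); lra.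
  rewrite -mulr_suml in hsum.
  have : f B <= - B + K * Num.sqrt B.
    rewrite /f /fsig /K -mulrA lerD2l; apply: ler_wpM2l => //; exact: ltW.
  have B0 : 0 <= B by case: DB => /ltW.
  have sB := sqr_sqrtr B0.
  have sB1 : 1 + K <= Num.sqrt B.
    rewrite -(ger0_norm (_ : 0 <= 1 + K)); last by lra.
    rewrite -sqrtr_sqr; apply: ler_wsqrtr; rewrite /B; lra.
  move: (Num.sqrt B) sB sB1 => s sB sB1; rewrite -sB; nra.
have gR1 : - f R1 < 0 by rewrite oppr_lt0 lt_def fn0 fR1.
have gB : 0 < - f B by rewrite oppr_gt0.
have [x [h1 h2 h3]] := @ivt_sd F D (fun x => - f x) S Dup HS Hc R1 B DR1 RB gR1 gB.
have [x0 Dx] := Dup _ _ DR1 h1.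
by exists x; split => //; split => //; apply/eqP; rewrite -oppr_eq0; apply/eqP.
Qed.
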